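(* Let $N\geq1$, $k\in\{1,\dots,N\}$ and for $i\in\{1,\dots,N\}$ let \[ v_i=\left(1-\frac{i-1}{N}\right)^k-\left(1-\frac{i}{N}\right)^k. \] Then for all integers $d\geq1$, \[ \sum_{i=1}^N v_i\left(\frac{i}{N+1}\right)^{1/d}\leq 2e\,k^{-1/d}. \] *)

(* Defs.v *)
From Stdlib Require Import Reals.
Open Scope R_scope.

Definition vcoef (N k i : nat) : R :=
  (1 - (INR i - 1) / INR N) ^ k - (1 - INR i / INR N) ^ k.

(* Main.v *)
Require Import Defs.
From Stdlib Require Import Reals Lra Lia.
Open Scope R_scope.

Fixpoint S1 (n : nat) (f : nat -> R) : R :=
  match n with O => 0 | S m => S1 m f + f (S m) end.

Lemma S1_sum_f n f : sum_f 1 (S n) f = S1 (S n) f.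
Proof.
  unfold sum_f. replace (S n - 1)%nat with n by lia.
  induction n as [|n IH].
  - simpl. ring.
  - simpl sum_f_R0. rewrite IH. replace (S (n + 1))%nat with (S (S n)) by lia. reflexivity.
Qed.

Definition W (N k j : nat) : R := (1 - INR j / INR N) ^ k.

Fixpoint T (N k m : nat) : R :=
  match m with O => 0 | S p => T N k p + W N k p end.

Lemma vcoef_S N k j : vcoef N k (S j) = W N k j - W N k (S j).
Proof.
  unfold vcoef, W. rewrite S_INR. replace (INR j + 1 - 1) with (INR j) by ring.
  rewrite <- S_INR. reflexivity.
Qed.

Lemma W0 N k : (1 <= N)%nat -> W N k 0 = 1.
Proof. intros. unfold W. simpl. replace (1 - 0 / INR N) with 1. apply pow1.
  field. apply not_0_INR. lia. Qed.

Lemma sumv N k n : (1 <= N)%nat -> S1 n (vcoef N k) = 1 - W N k n.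
Proof.
  intros HN. induction n as [|n IH].
  - simpl. rewrite W0; auto. ring.
  - simpl. rewrite IH, vcoef_S. ring.
Qed.

Lemma sumvi N k n : (1 <= N)%nat ->
  S1 n (fun i => vcoef N k i * INR i) = T N k n - INR n * W N k n.
Proof.
  intros HN. induction n as [|n IH].
  - simpl. ring.
  - change (S1 (S n) (fun i => vcoef N k i * INR i)) with (S1 n (fun i => vcoef N k i * INR i) + vcoef N k (S n) * INR (S n)).
    change (T N k (S n)) with (T N k n + W N k n).
    rewrite IH, vcoef_S, S_INR. ring.
Qed.

Lemma WN N k : (1 <= N)%nat -> (1 <= k)%nat -> W N k N = 0.
Proof.
  intros. unfold W. replace (1 - INR N / INR N) with 0. apply pow_i. lia.
  field. apply not_0_INR. lia.
Qed.

Lemma bern (y h : R) (n : nat) : 0 <= y -> 0 <= h ->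
  y ^ S n + INR (S n) * h * y ^ n <= (y + h) ^ S n.
Proof.
  intros Hy Hh. induction n as [|n IH].
  - simpl. lra.
  - assert (0 <= y ^ n) by (apply pow_le; auto).
    assert (0 <= y ^ S n) by (apply pow_le; auto).
    change ((y+h) ^ S (S n)) with ((y+h) * (y+h)^ S n).
    change (y ^ S (S n)) with (y * y ^ S n).
    change (y ^ S n) with (y * y ^ n) in *.
    rewrite !S_INR. rewrite S_INR in IH.
    assert (0 <= INR n) by apply pos_INR.
    apply Rle_trans with ((y+h) * (y * y ^ n + (INR n + 1) * h * y ^ n)).
    + assert (0 <= (INR n + 1) * (h * h * y ^ n)).
      { apply Rmult_le_pos. lra. apply Rmult_le_pos; auto. apply Rmult_le_pos; auto. }
      match goal with |- ?L <= ?R => assert (R - L = (INR n + 1) * (h * h * y ^ n)) by ring end.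
      lra.
    + apply Rmult_le_compat_l; lra.
Qed.

Lemma Tbound N k p : (1 <= N)%nat -> (S p <= N)%nat ->
  T N k (S p) <= 1 + INR N / (INR k + 1) * (1 - W N (S k) p).
Proof.
  intros HN. induction p as [|p IH]; intros Hp.
  - simpl. rewrite !W0; auto. lra.
  - assert (HNr : 0 < INR N) by (apply lt_0_INR; lia).
    assert (Hk : 0 < INR k + 1) by (generalize (pos_INR k); lra).
    specialize (IH ltac:(lia)).
    change (T N k (S (S p))) with (T N k (S p) + W N k (S p)).
    unfold W in *.
    set (y := 1 - INR (S p) / INR N).
    assert (Hy : 0 <= y).
    { unfold y. assert (INR (S p) <= INR N) by (apply le_INR; lia).
      assert (INR (S p) / INR N <= 1). { apply Rmult_le_reg_r with (INR N); auto.
      unfold Rdiv. rewrite Rmult_assoc, Rinv_l; lra. } lra. }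
    assert (Hyh : 1 - INR p / INR N = y + / INR N).
    { unfold y. rewrite S_INR. field. lra. }
    rewrite Hyh in IH.
    assert (B := bern y (/ INR N) k Hy ltac:(left; apply Rinv_0_lt_compat; lra)).
    rewrite S_INR in B.
    assert (E : INR N / (INR k + 1) * ((INR k + 1) * / INR N * y ^ k) = y ^ k)
      by (field; lra).
    assert (C : INR N / (INR k + 1) * ((INR k + 1) * / INR N * y ^ k) <=
                INR N / (INR k + 1) * ((y + / INR N) ^ S k - y ^ S k)).
    { apply Rmult_le_compat_l. unfold Rdiv. left. apply Rmult_lt_0_compat; auto.
      apply Rinv_0_lt_compat; auto. lra. }
    rewrite E in C. lra.
Qed.

Lemma S1_tangent n v g x A c a :
  (forall i, (1 <= i <= n)%nat -> v i * g i <= v i * (A + c * (x i - a))) ->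
  S1 n (fun i => v i * g i) <=
  A * S1 n v + c * S1 n (fun i => v i * x i) - c * a * S1 n v.
Proof.
  induction n as [|n IH]; intros H.
  - simpl. lra.
  - simpl. assert (IH' := IH ltac:(intros; apply H; lia)).
    assert (H1 := H (S n) ltac:(lia)).
    assert (E : v (S n) * (A + c * (x (S n) - a)) =
                A * v (S n) + c * (v (S n) * x (S n)) - c * a * v (S n)) by ring.
    lra.
Qed.

Lemma S1_div n v D : D <> 0 ->
  S1 n (fun i => v i * (INR i / D)) = S1 n (fun i => v i * INR i) / D.
Proof.
  intros HD. induction n as [|n IH]; simpl. field; auto. rewrite IH. field; auto.
Qed.

Lemma exp_le x y : x <= y -> exp x <= exp y.
Proof. intros [H|H]. left; apply exp_increasing; auto. subst; lra. Qed.

Lemma ln_le_m1 x : 0 < x -> ln x <= x - 1.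
Proof. intros. generalize (exp_ineq1_le (ln x)). rewrite exp_ln; auto. lra. Qed.

Lemma tangent1 t s : 0 < t -> 0 < s <= 1 -> exp (s * ln t) <= 1 + s * (t - 1).
Proof.
  intros Ht Hs. set (u := s * t + 1 - s).
  assert (Hu : 0 < u) by (unfold u; nra).
  assert (H1 := ln_le_m1 (t / u) ltac:(apply Rdiv_lt_0_compat; auto)).
  assert (H2 := ln_le_m1 (/ u) ltac:(apply Rinv_0_lt_compat; auto)).
  unfold Rdiv in H1. rewrite ln_mult in H1; auto; [|apply Rinv_0_lt_compat; auto].
  rewrite ln_Rinv in H1, H2; auto.
  assert (K : s * (t * / u - 1) + (1 - s) * (/ u - 1) = 0).
  { unfold u. field. unfold u in Hu. lra. }
  assert (s * ln t <= ln u) by nra.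
  replace (1 + s * (t - 1)) with u by (unfold u; ring).
  apply Rle_trans with (exp (ln u)); [apply exp_le; auto | rewrite exp_ln; lra].
Qed.

Lemma tangent x a s : 0 < x -> 0 < a -> 0 < s <= 1 ->
  Rpower x s <= Rpower a s + s * Rpower a s / a * (x - a).
Proof.
  intros Hx Ha Hs. unfold Rpower.
  replace x with (a * (x / a)) at 1 by (field; lra).
  rewrite ln_mult; [|auto|apply Rdiv_lt_0_compat; auto].
  rewrite Rmult_plus_distr_l, exp_plus.
  assert (H := tangent1 (x / a) s ltac:(apply Rdiv_lt_0_compat; auto) Hs).
  assert (P := exp_pos (s * ln a)).
  apply Rle_trans with (exp (s * ln a) * (1 + s * (x / a - 1))).
  apply Rmult_le_compat_l; lra.
  right. field. lra.
Qed.

Theorem lemma3p2 (N k d : nat) (hN : (1 <= N)%nat) (hk1 : (1 <= k)%nat)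
  (hkN : (k <= N)%nat) (hd : (1 <= d)%nat) :
  sum_f 1 N (fun i => vcoef N k i * Rpower (INR i / INR (N + 1)) (1 / INR d))
  <= 2 * exp 1 * Rpower (INR k) (- (1 / INR d)).
Proof.
  destruct N as [|N']; [lia|].
  rewrite S1_sum_f.
  set (N := S N') in *.
  set (s := 1 / INR d).
  assert (Hd : 1 <= INR d) by (apply (le_INR 1); auto).
  assert (Hs : 0 < s <= 1).
  { unfold s. split. apply Rdiv_lt_0_compat; lra.
    unfold Rdiv. rewrite Rmult_1_l. rewrite <- Rinv_1. apply Rinv_le_contravar; lra. }
  assert (Hk : 1 <= INR k) by (apply (le_INR 1); auto).
  assert (HNk : INR k <= INR N) by (apply le_INR; auto).
  assert (HN1 : INR (N + 1) = INR N + 1) by (rewrite plus_INR; simpl; ring).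
  set (a := 2 / (INR k + 1)).
  assert (Ha : 0 < a) by (unfold a; apply Rdiv_lt_0_compat; lra).
  set (A := Rpower a s).
  set (c := s * A / a).
  assert (HA : 0 < A) by (unfold A, Rpower; apply exp_pos).
  assert (Hc : 0 <= c) by (unfold c; left; apply Rdiv_lt_0_compat; nra).
  assert (Hv : forall i, (1 <= i <= N)%nat -> 0 <= vcoef N k i).
  { intros i Hi. destruct i as [|j]; [lia|]. rewrite vcoef_S. unfold W.
    assert (HNr : 0 < INR N) by (apply lt_0_INR; lia).
    assert (INR (S j) <= INR N) by (apply le_INR; lia).
    assert (0 <= 1 - INR (S j) / INR N).
    { assert (INR (S j) / INR N <= 1). { apply Rmult_le_reg_r with (INR N); auto.
      unfold Rdiv. rewrite Rmult_assoc, Rinv_l; lra. } lra. }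
    cut ((1 - INR (S j) / INR N) ^ k <= (1 - INR j / INR N) ^ k); [lra|]. apply pow_incr. split; [auto|].
    rewrite S_INR. unfold Rdiv. assert (0 < / INR N) by (apply Rinv_0_lt_compat; auto).
    nra. }
  assert (HNr : 0 < INR N) by (apply lt_0_INR; unfold N; lia).
  eapply Rle_trans.
  { apply (S1_tangent N (vcoef N k) (fun i => Rpower (INR i / INR (N + 1)) s)
             (fun i => INR i / INR (N + 1)) A c a).
    intros i Hi. apply Rmult_le_compat_l. apply Hv; auto.
    apply tangent; auto. apply Rdiv_lt_0_compat. apply lt_0_INR; lia. lra. }
  rewrite sumv by (unfold N; lia).
  rewrite WN by (unfold N; lia).
  rewrite S1_div by lra.
  rewrite sumvi by (unfold N; lia).
  rewrite WN by (unfold N; lia).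
  assert (HT : T N k N <= 1 + INR N / (INR k + 1)).
  { unfold N. eapply Rle_trans. apply Tbound; lia.
    fold N. assert (0 <= W N (S k) N').
    { unfold W. apply pow_le. 
      assert (INR N' <= INR N) by (apply le_INR; unfold N; lia).
      assert (INR N' / INR N <= 1). { apply Rmult_le_reg_r with (INR N); auto.
      unfold Rdiv. rewrite Rmult_assoc, Rinv_l; lra. } lra. }
    assert (0 < INR N / (INR k + 1)) by (apply Rdiv_lt_0_compat; lra). nra. }
  assert (HE : (T N k N - INR N * 0) / INR (N + 1) <= a).
  { rewrite HN1. unfold a. apply Rmult_le_reg_r with (INR N + 1). lra.
    unfold Rdiv. rewrite Rmult_assoc, Rinv_l by lra.
    apply Rle_trans with (1 + INR N / (INR k + 1)). lra.
    assert (E : 2 * / (INR k + 1) * (INR N + 1) - (1 + INR N / (INR k + 1))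
               = (INR N + 1 - INR k) * / (INR k + 1)) by (field; lra).
    assert (0 <= (INR N + 1 - INR k) * / (INR k + 1)).
    { apply Rmult_le_pos. lra. left; apply Rinv_0_lt_compat; lra. }
    lra. }
  assert (Hmain : A * (1 - 0) + c * ((T N k N - INR N * 0) / INR (N + 1)) - c * a * (1 - 0) <= A)
    by nra.
  eapply Rle_trans; [exact Hmain|].
  unfold A, Rpower. rewrite Rmult_assoc, <- exp_plus.
  assert (L2 : ln 2 < 1).
  { rewrite <- (ln_exp 1). apply ln_increasing. lra. generalize (exp_ineq1 1). lra. }
  assert (L2' : 0 < ln 2) by (generalize ln_lt_2; lra).
  assert (Lk : ln (INR k) < ln (INR k + 1)) by (apply ln_increasing; lra).
  assert (La : ln a = ln 2 - ln (INR k + 1)).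
  { unfold a, Rdiv. rewrite ln_mult, ln_Rinv; try lra. apply Rinv_0_lt_compat; lra. }
  rewrite La.
  apply Rle_trans with (1 * exp (1 + - s * ln (INR k))).
  rewrite Rmult_1_l. apply exp_le. nra.
  apply Rmult_le_compat_r. left; apply exp_pos. lra.
Qed.
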